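(* Let $(K,\mathcal O,k)$ be a $p$-modular system with $\mathcal O$ complete, let $\pi$ generate the maximal ideal of $\mathcal O$, and let $\Lambda$ be an $\mathcal O$-order in a separable $K$-algebra. Then the canonical map $\operatorname{Out}_{\mathcal O}(\Lambda)\to\operatorname{Out}_{\mathcal O}(\Lambda/\pi^s\Lambda)$ is injective for every $s\geq d(\Lambda\otimes_{\mathcal O}\Lambda^{\mathrm{op}})+1$.
   Context: A $p$-modular system $(K,\mathcal O,k)$ consists of a discrete valuation ring $\mathcal O$ of characteristic zero with fraction field $K$ and residue field $k$ of characteristic $p>0$. An $\mathcal O$-order in a separable $K$-algebra is an $\mathcal O$-algebra, free and finitely generated as an $\mathcal O$-module, whose scalar extension to $K$ is separable. $\operatorname{Out}_{\mathcal O}(A)=\operatorname{Aut}_{\mathcal O}(A)/\operatorname{Inn}(A)$. For such an order $\Gamma$, the depth $d(\Gamma)$ is defined by $\pi^{d(\Gamma)}\mathcal O=I(\Gamma)$, where $I(\Gamma)$ is the (nonzero) ideal of elements of $\mathcal O$ annihilating the Hochschild cohomology $H^1(\Gamma,T)$ for all $\Gamma$-$\Gamma$-bimodules $T$. *)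

(* Defs.v *)
From HB Require Import structures.
From mathcomp Require Import all_boot all_order all_algebra.
Set Implicit Arguments. Unset Strict Implicit. Unset Printing Implicit Defensive.
Import Order.TTheory GRing.Theory Num.Theory.
Local Open Scope ring_scope.

Definition is_dvr_unif (O : idomainType) (pi : O) : Prop :=
  pi != 0 /\ pi \isn't a GRing.unit /\
  forall a : O, a != 0 -> exists (u : O) (n : nat), u \is a GRing.unit /\ a = u * pi ^+ n.

Definition char_zero (O : idomainType) : Prop := forall n : nat, (0 < n)%N -> n%:R != 0 :> O.

(* residue field O/pi O has characteristic p (p prime) *)
Definition residue_char (O : idomainType) (pi : O) (p : nat) : Prop :=
  prime p /\ exists y : O, p%:R = pi * y.

Definition pi_complete (O : idomainType) (pi : O) : Prop :=
  forall a : nat -> O, (forall n, exists y, a n.+1 - a n = pi ^+ n * y) ->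
    exists l : O, forall n, exists y, l - a n = pi ^+ n * y.

Definition is_frac_field (O : idomainType) (K : fieldType) (iota : {rmorphism O -> K}) : Prop :=
  injective iota /\ forall k : K, exists a b : O, b != 0 /\ k = iota a / iota b.

Definition scalev (R : pzRingType) (I : finType) (a : R) (x : {ffun I -> R}) : {ffun I -> R} :=
  [ffun k => a * x k].

(* An algebra free on the finite basis I over R is given by structure
   constants c with e_i e_j = \sum_k c i j k e_k; elements are coordinate
   vectors {ffun I -> R}. *)
Definition mulc (R : pzRingType) (I : finType) (c : I -> I -> I -> R)
  (x y : {ffun I -> R}) : {ffun I -> R} :=
  [ffun k => \sum_(i : I) \sum_(j : I) x i * y j * c i j k].

Definition basisv (R : pzRingType) (I : finType) (i : I) : {ffun I -> R} :=
  [ffun k => (k == i)%:R].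

Definition is_assoc_alg (R : pzRingType) (I : finType) (c : I -> I -> I -> R)
  (u : {ffun I -> R}) : Prop :=
  (forall x y z, mulc c (mulc c x y) z = mulc c x (mulc c y z)) /\
  (forall x, mulc c u x = x) /\ (forall x, mulc c x u = x).

(* Separable algebra over a field: existence of a separability idempotent
   e = \sum e(i,j) e_i (x) e_j in A (x) A^op with m(e) = 1 and
   x e = e x for the A-bimodule structure of A (x) A. *)
Definition separable_alg (K : fieldType) (I : finType) (c : I -> I -> I -> K)
  (u : {ffun I -> K}) : Prop :=
  exists e : {ffun I * I -> K},
    (forall k, \sum_(i : I) \sum_(j : I) e (i, j) * c i j k = u k) /\
    (forall (x : {ffun I -> K}) (a b : I),
       \sum_(i : I) e (i, b) * mulc c x (basisv K i) a =
       \sum_(j : I) e (a, j) * mulc c (basisv K j) x b).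

Definition is_order_sep (O : idomainType) (K : fieldType) (iota : {rmorphism O -> K})
  (I : finType) (c : I -> I -> I -> O) (u : {ffun I -> O}) : Prop :=
  is_assoc_alg c u /\
  separable_alg (fun i j k => iota (c i j k)) [ffun i => iota (u i)].

(* Enveloping algebra Lambda (x)_O Lambda^op, basis I * I,
   (e_i (x) e_j)(e_k (x) e_l) = e_i e_k (x) e_l e_j. *)
Definition env_sc (R : pzRingType) (I : finType) (c : I -> I -> I -> R) :
  I * I -> I * I -> I * I -> R :=
  fun ij kl mn => c ij.1 kl.1 mn.1 * c kl.2 ij.2 mn.2.

Definition env_unit (R : pzRingType) (I : finType) (u : {ffun I -> R}) : {ffun I * I -> R} :=
  [ffun ij => u ij.1 * u ij.2].

Definition is_bimod (O : comNzRingType) (J : finType) (g : J -> J -> J -> O)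
  (v : {ffun J -> O}) (T : lmodType O)
  (l r : {ffun J -> O} -> T -> T) : Prop :=
  (forall (a : O) (x y : {ffun J -> O}) (t : T), l (scalev a x + y) t = a *: l x t + l y t) /\
  (forall (a : O) (x : {ffun J -> O}) (t s : T), l x (a *: t + s) = a *: l x t + l x s) /\
  (forall (a : O) (x y : {ffun J -> O}) (t : T), r (scalev a x + y) t = a *: r x t + r y t) /\
  (forall (a : O) (x : {ffun J -> O}) (t s : T), r x (a *: t + s) = a *: r x t + r x s) /\
  (forall x y t, l (mulc g x y) t = l x (l y t)) /\ (forall t, l v t = t) /\
  (forall x y t, r (mulc g x y) t = r y (r x t)) /\ (forall t, r v t = t) /\
  (forall x y t, l x (r y t) = r y (l x t)).

(* O-linear derivations Gamma -> T  (l x t = x.t, r x t = t.x) *)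
Definition is_der (O : comNzRingType) (J : finType) (g : J -> J -> J -> O)
  (T : lmodType O) (l r : {ffun J -> O} -> T -> T) (d : {ffun J -> O} -> T) : Prop :=
  (forall (a : O) (x y : {ffun J -> O}), d (scalev a x + y) = a *: d x + d y) /\
  (forall x y, d (mulc g x y) = l x (d y) + r y (d x)).

(* I(Gamma): elements c of O annihilating H^1(Gamma, T) for every bimodule T,
   i.e. c.delta is an inner derivation for every derivation delta. *)
Definition annH1 (O : comNzRingType) (J : finType) (g : J -> J -> J -> O)
  (v : {ffun J -> O}) (a : O) : Prop :=
  forall (T : lmodType O) (l r : {ffun J -> O} -> T -> T),
    is_bimod g v l r ->
    forall d : {ffun J -> O} -> T, is_der g l r d ->
      exists t : T, forall x, a *: d x = l x t - r x t.

(* d(Gamma) = dd  iff  I(Gamma) = pi^dd O *)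
Definition depth_is (O : comNzRingType) (pi : O) (J : finType) (g : J -> J -> J -> O)
  (v : {ffun J -> O}) (dd : nat) : Prop :=
  forall a : O, annH1 g v a <-> exists y : O, a = pi ^+ dd * y.

Definition is_aut (O : comNzRingType) (I : finType) (c : I -> I -> I -> O)
  (u : {ffun I -> O}) (f : {ffun I -> O} -> {ffun I -> O}) : Prop :=
  (forall (a : O) (x y : {ffun I -> O}), f (scalev a x + y) = scalev a (f x) + f y) /\
  (forall x y, f (mulc c x y) = mulc c (f x) (f y)) /\
  f u = u /\ bijective f.

Definition congr_mod (O : comNzRingType) (I : finType) (q : O) (x y : {ffun I -> O}) : Prop :=
  exists z : {ffun I -> O}, x - y = scalev q z.

(* Main.v *)
Require Import Defs.
From HB Require Import structures.
From mathcomp Require Import all_boot all_order all_algebra.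
From mathcomp Require Import ring.
Import Order.TTheory GRing.Theory Num.Theory.
Set Implicit Arguments. Unset Strict Implicit.
Local Open Scope ring_scope.

Section Mulc.
Variables (R : comNzRingType) (I : finType) (c : I -> I -> I -> R).
Local Notation M := (mulc c).

Lemma mulcDl (x y z : {ffun I -> R}) : M (x + y) z = M x z + M y z.
Proof.
apply/ffunP=> k; rewrite !ffunE -big_split; apply: eq_bigr => i _.
rewrite -big_split; apply: eq_bigr => j _; rewrite !ffunE /=; ring.
Qed.

Lemma mulcDr (x y z : {ffun I -> R}) : M z (x + y) = M z x + M z y.
Proof.
apply/ffunP=> k; rewrite !ffunE -big_split; apply: eq_bigr => i _.
rewrite -big_split; apply: eq_bigr => j _; rewrite !ffunE /=; ring.
Qed.

Lemma mulcZl a (x z : {ffun I -> R}) : M (scalev a x) z = scalev a (M x z).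
Proof.
apply/ffunP=> k; rewrite !ffunE mulr_sumr; apply: eq_bigr => i _.
rewrite mulr_sumr; apply: eq_bigr => j _; rewrite !ffunE /=; ring.
Qed.

Lemma mulcZr a (x z : {ffun I -> R}) : M z (scalev a x) = scalev a (M z x).
Proof.
apply/ffunP=> k; rewrite !ffunE mulr_sumr; apply: eq_bigr => i _.
rewrite mulr_sumr; apply: eq_bigr => j _; rewrite !ffunE /=; ring.
Qed.

Lemma mulcNl (x z : {ffun I -> R}) : M (- x) z = - M x z.
Proof.
apply/ffunP=> k; rewrite !ffunE -sumrN; apply: eq_bigr => i _.
rewrite -sumrN; apply: eq_bigr => j _; rewrite !ffunE /=; ring.
Qed.

Lemma mulcNr (x z : {ffun I -> R}) : M z (- x) = - M z x.
Proof.
apply/ffunP=> k; rewrite !ffunE -sumrN; apply: eq_bigr => i _.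
rewrite -sumrN; apply: eq_bigr => j _; rewrite !ffunE /=; ring.
Qed.

Lemma mulcBl (x y z : {ffun I -> R}) : M (x - y) z = M x z - M y z.
Proof. by rewrite mulcDl mulcNl. Qed.
Lemma mulcBr (x y z : {ffun I -> R}) : M z (x - y) = M z x - M z y.
Proof. by rewrite mulcDr mulcNr. Qed.

Lemma scalevA a b (x : {ffun I -> R}) : scalev a (scalev b x) = scalev (a * b) x.
Proof. by apply/ffunP=> k; rewrite !ffunE mulrA. Qed.
Lemma scalevD a (x y : {ffun I -> R}) : scalev a (x + y) = scalev a x + scalev a y.
Proof. by apply/ffunP=> k; rewrite !ffunE mulrDr. Qed.
Lemma scalevN a (x : {ffun I -> R}) : scalev a (- x) = - scalev a x.
Proof. by apply/ffunP=> k; rewrite !ffunE mulrN. Qed.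
Lemma scalevB a (x y : {ffun I -> R}) : scalev a (x - y) = scalev a x - scalev a y.
Proof. by rewrite scalevD scalevN. Qed.
Lemma scalev1 (x : {ffun I -> R}) : scalev 1 x = x.
Proof. by apply/ffunP=> k; rewrite !ffunE mul1r. Qed.
Lemma scalev0 a : scalev a (0 : {ffun I -> R}) = 0.
Proof. by apply/ffunP=> k; rewrite !ffunE mulr0. Qed.

Lemma scalev0r (x : {ffun I -> R}) : scalev 0 x = 0.
Proof. by apply/ffunP=> k; rewrite !ffunE mul0r. Qed.
Lemma mulc0r (z : {ffun I -> R}) : M z 0 = 0.
Proof. by have := mulcZr 0 0 z; rewrite !scalev0r. Qed.
Lemma mulc0l (z : {ffun I -> R}) : M 0 z = 0.
Proof. by have := mulcZl 0 0 z; rewrite !scalev0r. Qed.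

Definition dvb (q : R) (x : {ffun I -> R}) := exists z, x = scalev q z.

Lemma dvb0 q : dvb q 0.
Proof. by exists 0; rewrite scalev0. Qed.
Lemma dvbD q x y : dvb q x -> dvb q y -> dvb q (x + y).
Proof. by move=> [z1 ->] [z2 ->]; exists (z1 + z2); rewrite scalevD. Qed.
Lemma dvbN q x : dvb q x -> dvb q (- x).
Proof. by move=> [z1 ->]; exists (- z1); rewrite scalevN. Qed.
Lemma dvbB q x y : dvb q x -> dvb q y -> dvb q (x - y).
Proof. by move=> h1 h2; apply: dvbD => //; apply: dvbN. Qed.
Lemma dvbMl q x y : dvb q x -> dvb q (M y x).
Proof. by move=> [z ->]; exists (M y z); rewrite mulcZr. Qed.
Lemma dvbMr q x y : dvb q x -> dvb q (M x y).
Proof. by move=> [z ->]; exists (M z y); rewrite mulcZl. Qed.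
Lemma dvbMM a b x y : dvb a x -> dvb b y -> dvb (a * b) (M x y).
Proof. by move=> [z1 ->] [z2 ->]; exists (M z1 z2); rewrite mulcZl mulcZr scalevA. Qed.
Lemma dvbS a b x : dvb (a * b) x -> dvb a x.
Proof. by move=> [z ->]; exists (scalev b z); rewrite scalevA. Qed.
Lemma dvbX (a : R) m n x : (m <= n)%N -> dvb (a ^+ n) x -> dvb (a ^+ m) x.
Proof. by move=> /subnK <-; rewrite exprD mulrC; apply: dvbS. Qed.

End Mulc.

Lemma div_all_zero (O : idomainType) (pi : O) : is_dvr_unif pi ->
  forall a : O, (forall n, exists y, a = pi ^+ n * y) -> a = 0.
Proof.
move=> [pi0 [piu H]] a Ha; apply/eqP; apply/negPn/negP => a0.
have [w [n [wu ea]]] := H a a0.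
have [y ey] := Ha n.+1.
have pn0 : pi ^+ n != 0 by rewrite expf_neq0.
move: ey; rewrite ea exprSr -mulrA mulrC => /(mulfI pn0) ew.
by move: wu; rewrite ew unitrM => /andP[]; rewrite (negPf piu).
Qed.

Section Geo.
Variables (O : idomainType) (pi : O) (Hdvr : is_dvr_unif pi) (Hc : pi_complete pi).
Variables (I : finType) (c : I -> I -> I -> O) (u : {ffun I -> O}).
Hypothesis Ha : is_assoc_alg c u.
Local Notation M := (mulc c).

Lemma dvb_all_zero (x : {ffun I -> O}) : (forall n, dvb (pi ^+ n) x) -> x = 0.
Proof.
move=> H; apply/ffunP => i; rewrite ffunE /=; apply: (div_all_zero Hdvr) => n.
by have [z ->] := H n; exists (z i); rewrite ffunE.
Qed.

Lemma geo (q : {ffun I -> O}) : dvb pi q ->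
  exists L, M (u - q) L = u /\ M L (u - q) = u.
Proof.
move: Ha => [HA [H1l H1r]] dq.
pose P n := iter n (M q) u.
pose S n := \sum_(k < n) P k.
have PS n : P n.+1 = M q (P n) by [].
have Pd n : dvb (pi ^+ n) (P n).
  elim: n => [|n IH]; first by exists u; rewrite scalev1.
  by rewrite PS exprS; apply: dvbMM.
have Pc n : M (P n) q = M q (P n).
  elim: n => [|n IH]; first by rewrite /= H1l H1r.
  by rewrite PS HA IH.
have SS n : S n.+1 = S n + P n by rewrite /S big_ord_recr.
have Sl n : M (u - q) (S n) = u - P n.
  elim: n => [|n IH].
    by rewrite /S big_ord0 /= mulc0r subrr.
  by rewrite SS mulcDr IH mulcBl H1l PS addrA subrK.
have Sr n : M (S n) (u - q) = u - P n.
  elim: n => [|n IH].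
    by rewrite /S big_ord0 /= mulc0l subrr.
  by rewrite SS mulcDl IH mulcBr H1r Pc PS addrA subrK.
have lim i : exists l, forall n, exists y, l - S n i = pi ^+ n * y.
  apply: Hc => n; have [z ez] := Pd n; exists (z i).
  by rewrite SS !ffunE addrC addKr ez ffunE.
have [L HL] := fin_all_exists lim.
pose L' := [ffun i => L i].
have LS n : dvb (pi ^+ n) (L' - S n).
  have [z hz] := fin_all_exists (fun i => HL i n).
  by exists [ffun i => z i]; apply/ffunP => i; rewrite !ffunE hz.
exists L'; split; apply/eqP; rewrite -subr_eq0; apply/eqP; apply: dvb_all_zero => n.
  have -> : M (u - q) L' - u = M (u - q) (L' - S n) - P n.
    by rewrite mulcBr Sl; apply/ffunP => k; rewrite !ffunE /=; ring.
  by apply: dvbB; [apply: dvbMl|].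
have -> : M L' (u - q) - u = M (L' - S n) (u - q) - P n.
  by rewrite mulcBl Sr; apply/ffunP => k; rewrite !ffunE /=; ring.
by apply: dvbB; [apply: dvbMr|].
Qed.

Lemma unit_cong (x : {ffun I -> O}) : congr_mod pi x u ->
  exists xi, M x xi = u /\ M xi x = u.
Proof.
move=> [z ez]; have dq : dvb pi (u - x).
  by exists (- z); rewrite scalevN -ez opprB.
have [L [h1 h2]] := geo dq.
by exists L; move: h1 h2; rewrite opprB addrC subrK.
Qed.
End Geo.

Section Lin.
Variables (R : comNzRingType).

Definition linF (V X : lmodType R) (F : V -> X) :=
  forall a x y, F (a *: x + y) = a *: F x + F y.

Lemma linF0 (V X : lmodType R) (F : V -> X) : linF F -> F 0 = 0.
Proof.
move=> h; have := h 1 0 0; rewrite !scale1r addr0 => H0.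
by apply: (@addrI _ (F 0)); rewrite addr0 -H0.
Qed.

Lemma linFD (V X : lmodType R) (F : V -> X) : linF F -> forall x y, F (x + y) = F x + F y.
Proof. by move=> h x y; have := h 1 x y; rewrite !scale1r. Qed.

Lemma linF_sum (V X : lmodType R) (F : V -> X) : linF F ->
  forall (J : Type) (r : seq J) (a : J -> R) (v : J -> V),
  F (\sum_(j <- r) a j *: v j) = \sum_(j <- r) a j *: F (v j).
Proof.
move=> h J r a v; apply: (big_rec2 (fun s1 s2 => F s1 = s2)); first exact: linF0.
by move=> j y1 y2 _ <-; rewrite h.
Qed.

Variable (I : finType).
Local Notation A := {ffun I -> R}.
Local Notation e := (basisv R).

Definition linA (X : lmodType R) (F : A -> X) :=
  forall a x y, F (scalev a x + y) = a *: F x + F y.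

Lemma linA0 (X : lmodType R) (F : A -> X) : linA F -> F 0 = 0.
Proof.
move=> h; have := h 1 0 0; rewrite scalev1 !scale1r addr0 => H0.
by apply: (@addrI _ (F 0)); rewrite addr0 -H0.
Qed.

Lemma linA_sum (X : lmodType R) (F : A -> X) : linA F ->
  forall (J : Type) (r : seq J) (a : J -> R) (v : J -> A),
  F (\sum_(j <- r) scalev (a j) (v j)) = \sum_(j <- r) a j *: F (v j).
Proof.
move=> h J r a v; apply: (big_rec2 (fun s1 s2 => F s1 = s2)); first exact: linA0.
by move=> j y1 y2 _ <-; rewrite h.
Qed.

Lemma expand (x : A) : x = \sum_m scalev (x m) (e m).
Proof.
apply/ffunP => k; rewrite sum_ffunE (bigD1 k) //= big1 => [|m /negbTE hm].
  by rewrite !ffunE eqxx mulr1 addr0.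
by rewrite !ffunE eq_sym hm mulr0.
Qed.

Lemma lin_expand (X : lmodType R) (F : A -> X) : linA F ->
  forall x, F x = \sum_m x m *: F (e m).
Proof. by move=> h x; rewrite {1}(expand x) linA_sum. Qed.

Lemma bil_expand (X : lmodType R) (H : A -> A -> X) :
  (forall y, linA (H ^~ y)) -> (forall x, linA (H x)) ->
  forall x y : A, \sum_m \sum_n (x m * y n) *: H (e m) (e n) = H x y.
Proof.
move=> h1 h2 x y; rewrite (lin_expand (h1 y)); apply: eq_bigr => m _.
rewrite (lin_expand (h2 (e m))) scaler_sumr; apply: eq_bigr => n _.
by rewrite scalerA.
Qed.

End Lin.

Section Gam.
Variables (R : comNzRingType) (I : finType) (c : I -> I -> I -> R).
Local Notation A := {ffun I -> R}.
Local Notation G := {ffun (I * I)%type -> R}.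
Local Notation e := (basisv R).
Local Notation M := (mulc c).

Definition ev (X : lmodType R) (g : G) (h : I -> I -> X) : X :=
  \sum_(p : I * I) g p *: h p.1 p.2.

Lemma ev_lin (X : lmodType R) a (g g' : G) (h : I -> I -> X) :
  ev (scalev a g + g') h = a *: ev g h + ev g' h.
Proof.
rewrite /ev scaler_sumr -big_split; apply: eq_bigr => p _.
by rewrite !ffunE scalerDl scalerA.
Qed.

Lemma ev_linh (X Y : lmodType R) (F : X -> Y) (g : G) (h : I -> I -> X) :
  linF F -> F (ev g h) = ev g (fun i j => F (h i j)).
Proof. by move=> hF; rewrite /ev linF_sum. Qed.

Lemma basis_mul i k : M (e i) (e k) = [ffun m => c i k m].
Proof.
apply/ffunP => m; rewrite !ffunE (bigD1 i) //= [X in _ + X]big1 => [|i' /negbTE hi].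
  rewrite addr0 (bigD1 k) //= [X in _ + X]big1 => [|k' /negbTE hk].
    by rewrite !ffunE !eqxx !mul1r !addr0.
  by rewrite !ffunE hk mulr0 mul0r.
by apply: big1 => k' _; rewrite !ffunE hi !mul0r.
Qed.

Lemma ev_env (X : lmodType R) (g g' : G) (h : I -> I -> X) :
  ev (mulc (env_sc c) g g') h =
  \sum_(p : I * I) \sum_(q : I * I) (g p * g' q) *:
     (\sum_m \sum_n (c p.1 q.1 m * c q.2 p.2 n) *: h m n).
Proof.
rewrite /ev.
under eq_bigr => mn _ do rewrite ffunE scaler_suml; rewrite exchange_big /=.
apply: eq_bigr => p _.
under eq_bigr => mn _ do rewrite scaler_suml; rewrite exchange_big /=.
apply: eq_bigr => q _.
rewrite scaler_sumr.
under [RHS]eq_bigr => m _ do rewrite scaler_sumr.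
rewrite [RHS]pair_bigA /=; apply: eq_bigr => mn _.
by rewrite scalerA /env_sc.
Qed.

Lemma ev_env_bil (X : lmodType R) (H : A -> A -> X) (g g' : G) :
  (forall y, linA (H ^~ y)) -> (forall x, linA (H x)) ->
  ev (mulc (env_sc c) g g') (fun m n => H (e m) (e n)) =
  \sum_(p : I * I) \sum_(q : I * I) (g p * g' q) *:
     H (M (e p.1) (e q.1)) (M (e q.2) (e p.2)).
Proof.
move=> h1 h2; rewrite ev_env; apply: eq_bigr => p _; apply: eq_bigr => q _.
by rewrite -bil_expand // !basis_mul; congr (_ *: _); apply: eq_bigr => m _;
  apply: eq_bigr => n _; rewrite !ffunE.
Qed.

Lemma ev_tensor (X : lmodType R) (H : A -> A -> X) (x y : A) :
  (forall y, linA (H ^~ y)) -> (forall x, linA (H x)) ->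
  ev [ffun p => x p.1 * y p.2] (fun m n => H (e m) (e n)) = H x y.
Proof.
move=> h1 h2; rewrite -bil_expand // pair_bigA /ev; apply: eq_bigr => p _.
by rewrite ffunE.
Qed.

End Gam.

Section Psi.
Variables (R : comNzRingType) (I : finType) (c : I -> I -> I -> R) (u : {ffun I -> R}).
Local Notation A := {ffun I -> R}.
Local Notation G := {ffun (I * I)%type -> R}.
Local Notation e := (basisv R).
Local Notation M := (mulc c).
Variables (X : lmodType R) (P Q : A -> X -> X).
Hypothesis HB : is_bimod c u P Q.

Lemma Plin y : linA (fun x => P x y).
Proof. by case: HB => h _ a x z; apply: h. Qed.
Lemma Pt x : linF (P x).
Proof. by case: HB => _ [h _] a t s; apply: h. Qed.
Lemma Qlin y : linA (fun x => Q x y).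
Proof. by case: HB => _ [_ [h _]] a x z; apply: h. Qed.
Lemma Qt x : linF (Q x).
Proof. by case: HB => _ [_ [_ [h _]]] a t s; apply: h. Qed.
Lemma PM x y t : P (M x y) t = P x (P y t).
Proof. by case: HB => _ [_ [_ [_ [h _]]]]. Qed.
Lemma Pu t : P u t = t.
Proof. by case: HB => _ [_ [_ [_ [_ [h _]]]]]. Qed.
Lemma QM x y t : Q (M x y) t = Q y (Q x t).
Proof. by case: HB => _ [_ [_ [_ [_ [_ [h _]]]]]]. Qed.
Lemma Qu t : Q u t = t.
Proof. by case: HB => _ [_ [_ [_ [_ [_ [_ [h _]]]]]]]. Qed.
Lemma PQ x y t : P x (Q y t) = Q y (P x t).
Proof. by case: HB => _ [_ [_ [_ [_ [_ [_ [_ h]]]]]]]. Qed.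

Definition Psi (g : G) (t : X) : X := ev g (fun i j => P (e i) (Q (e j) t)).

Lemma Psi_lin_g a g g' t : Psi (scalev a g + g') t = a *: Psi g t + Psi g' t.
Proof. exact: ev_lin. Qed.

Lemma Psi_lin_t g : linF (Psi g).
Proof.
move=> a t s; rewrite /Psi /ev scaler_sumr -big_split; apply: eq_bigr => p _ /=.
by rewrite Qt Pt scalerDr !scalerA mulrC.
Qed.

Lemma PQlin t : forall x, linA (fun y => P x (Q y t)).
Proof. by move=> x a y z; rewrite Qlin Pt. Qed.

Lemma Psi_mul g g' t : Psi (mulc (env_sc c) g g') t = Psi g (Psi g' t).
Proof.
rewrite /Psi (@ev_env_bil _ _ c _ (fun x y => P x (Q y t))); last first.
- exact: PQlin.
- by move=> y; apply: Plin.
rewrite {1}/ev; apply: eq_bigr => p _.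
rewrite (@linF_sum _ _ _ (fun s => P (e p.1) (Q (e p.2) s))); last first.
  by move=> a x y; rewrite Qt Pt.
rewrite scaler_sumr; apply: eq_bigr => q _.
by rewrite scalerA PM QM (PQ (e q.1)).
Qed.

Lemma Psi_unit t : Psi (env_unit u) t = t.
Proof.
rewrite /Psi /env_unit (@ev_tensor _ _ _ (fun x y => P x (Q y t))).
- by rewrite Qu Pu.
- by move=> y; apply: Plin.
- exact: PQlin.
Qed.

Lemma Psi_tensor (x y : A) t : Psi [ffun p => x p.1 * y p.2] t = P x (Q y t).
Proof.
rewrite /Psi (@ev_tensor _ _ _ (fun x y => P x (Q y t))) //.
- by move=> y'; apply: Plin.
- exact: PQlin.
Qed.

End Psi.

Section Reg.
Variables (R : comNzRingType) (I : finType) (c : I -> I -> I -> R) (u : {ffun I -> R}).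
Local Notation A := {ffun I -> R}.
Local Notation X0 := {ffun I -> R^o}.
Local Notation M := (mulc c).
Hypothesis Ha : is_assoc_alg c u.

Definition P0 (x : A) (t : X0) : X0 := mulc c x t.
Definition Q0 (x : A) (t : X0) : X0 := mulc c t x.

Lemma reg_bimod : is_bimod c u P0 Q0.
Proof.
case: Ha => [HA [H1l H1r]].
split; [|split; [|split; [|split; [|split; [|split; [|split; [|split]]]]]]].
- move=> a x y t; rewrite /P0 mulcDl mulcZl; reflexivity.
- move=> a x t s; rewrite /P0.
  change (M x (scalev a t + s) = scalev a (M x t) + M x s).
  by rewrite mulcDr mulcZr.
- move=> a x y t; rewrite /Q0 mulcDr mulcZr; reflexivity.
- move=> a x t s; rewrite /Q0.
  change (M (scalev a t + s) x = scalev a (M t x) + M s x).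
  by rewrite mulcDl mulcZl.
- by move=> x y t; rewrite /P0 HA.
- by move=> t; rewrite /P0 H1l.
- by move=> x y t; rewrite /Q0 HA.
- by move=> t; rewrite /Q0 H1r.
- by move=> x y t; rewrite /P0 /Q0 HA.
Qed.

End Reg.

Section NB.
Variables (R : comNzRingType) (I : finType) (c : I -> I -> I -> R) (u : {ffun I -> R}).
Local Notation A := {ffun I -> R}.
Local Notation X0 := {ffun I -> R^o}.
Local Notation G := {ffun (I * I)%type -> R}.
Local Notation e := (basisv R).
Local Notation M := (mulc c).
Hypothesis Ha : is_assoc_alg c u.
Variables (X : lmodType R) (P Q : A -> X -> X).
Hypothesis HB : is_bimod c u P Q.
Local Notation N := {ffun I -> X}.

Definition appF (F : N) (z : A) : X := \sum_m z m *: F m.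
Definition PsiL (g : G) (z : A) : X0 := Psi (P0 c) (Q0 c) g z.
Definition lN (g : G) (F : N) : N := [ffun k => Psi P Q g (F k)].
Definition rN (g : G) (F : N) : N := [ffun k => appF F (PsiL g (e k))].

Lemma appF_linF z : linF (fun F : N => appF F z).
Proof.
move=> a F F'; rewrite /appF scaler_sumr -big_split; apply: eq_bigr => m _.
by rewrite !ffunE scalerDr !scalerA mulrC.
Qed.

Lemma appF_linz F : linA (appF F).
Proof.
move=> a z z'; rewrite /appF scaler_sumr -big_split; apply: eq_bigr => m _.
by rewrite !ffunE scalerDl scalerA.
Qed.

Lemma appF_e F k : appF F (e k) = F k.
Proof.
rewrite /appF (bigD1 k) //= big1 => [|m /negbTE hm].
  by rewrite !ffunE eqxx scale1r addr0.
by rewrite !ffunE hm scale0r.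
Qed.

Lemma appF_map (Lf : X -> X) F z : linF Lf -> Lf (appF F z) = appF [ffun m => Lf (F m)] z.
Proof. by move=> h; rewrite /appF (linF_sum h); apply: eq_bigr => m _; rewrite ffunE. Qed.

Lemma PsiL_lin g : linA (PsiL g).
Proof. move=> a z z'; exact: (Psi_lin_t (reg_bimod Ha) g a z z'). Qed.

Lemma appF_rN g F z : appF (rN g F) z = appF F (PsiL g z).
Proof.
have hl : linA (fun z => appF F (PsiL g z)).
  by move=> a x y; rewrite PsiL_lin; apply: appF_linz.
rewrite (lin_expand hl z) /=.
by rewrite {1}/appF; apply: eq_bigr => m _; rewrite ffunE.
Qed.

Lemma N_bimod : is_bimod (env_sc c) (env_unit u) lN rN.
Proof.
split; [|split; [|split; [|split; [|split; [|split; [|split; [|split]]]]]]].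
- by move=> a g g' F; apply/ffunP => k; rewrite !ffunE Psi_lin_g.
- by move=> a g F F'; apply/ffunP => k; rewrite !ffunE (Psi_lin_t HB).
- move=> a g g' F; apply/ffunP => k; rewrite !ffunE /PsiL Psi_lin_g.
  exact: appF_linz.
- by move=> a g F F'; apply/ffunP => k; rewrite !ffunE appF_linF.
- by move=> g g' F; apply/ffunP => k; rewrite !ffunE (Psi_mul HB).
- by move=> F; apply/ffunP => k; rewrite !ffunE (Psi_unit HB).
- move=> g g' F; apply/ffunP => k; rewrite !ffunE appF_rN /PsiL.
  by rewrite (Psi_mul (reg_bimod Ha)).
- by move=> F; apply/ffunP => k; rewrite !ffunE /PsiL (Psi_unit (reg_bimod Ha)) appF_e.
- move=> g g' F; apply/ffunP => k; rewrite !ffunE (appF_map _ _ (Psi_lin_t HB g)).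
  by congr appF; apply/ffunP => m; rewrite !ffunE.
Qed.

Variable D : A -> X.
Hypothesis HD : is_der c P Q D.

Definition delta (g : G) : N := [ffun k => ev g (fun i j => Q (e j) (Q (e k) (D (e i))))].

Lemma Dlin : linA D.
Proof. by case: HD => h _ a x y; apply: h. Qed.
Lemma DM x y : D (M x y) = P x (D y) + Q y (D x).
Proof. by case: HD. Qed.

Lemma QlinX w : linF (fun z : X0 => Q z w).
Proof. move=> a x y; exact: (Qlin HB w a x y). Qed.

Lemma appF_delta g z :
  appF (delta g) z = ev g (fun i j => Q (e j) (Q z (D (e i)))).
Proof.
rewrite /appF /ev.
under eq_bigr => m _ do rewrite ffunE /ev scaler_sumr.
rewrite exchange_big /=; apply: eq_bigr => p _.
have hl : linA (fun z => Q (e p.2) (Q z (D (e p.1)))).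
  by move=> a x y; rewrite (Qlin HB) (Qt HB).
rewrite (lin_expand hl z) /= scaler_sumr; apply: eq_bigr => m _.
by rewrite !scalerA mulrC.
Qed.

Lemma delta_der : is_der (env_sc c) lN rN delta.
Proof.
split.
  by move=> a g g'; apply/ffunP => k; rewrite !ffunE ev_lin.
move=> g g'; apply/ffunP => k; rewrite !ffunE appF_delta.
rewrite (@ev_env_bil _ _ c _ (fun x y => Q y (Q (e k) (D x)))); last first.
- by move=> x a y y'; rewrite (Qlin HB).
- by move=> y a x x'; rewrite Dlin (Qt HB) (Qt HB).
rewrite /Psi /PsiL {1 2}/ev -big_split; apply: eq_bigr => p _ /=.
rewrite (@linF_sum _ _ _ (fun s => P (e p.1) (Q (e p.2) s))); last first.
  by move=> a x y; rewrite (Qt HB) (Pt HB).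
rewrite /ev (linF_sum (QlinX _)) (linF_sum (Qt HB _)).
rewrite !scaler_sumr -big_split; apply: eq_bigr => q _ /=.
rewrite !scalerA -scalerDr; congr (_ *: _).
rewrite /P0 /Q0 !(QM HB) DM.
rewrite (linFD (Qt HB _)) (linFD (Qt HB _)) (linFD (Qt HB _)).
by rewrite -!(PQ HB).
Qed.

Lemma appF_Z a F z : appF (a *: F) z = a *: appF F z.
Proof.
rewrite /appF scaler_sumr; apply: eq_bigr => m _.
by rewrite !ffunE !scalerA mulrC.
Qed.

Lemma appF_B F F' z : appF (F - F') z = appF F z - appF F' z.
Proof.
rewrite /appF -sumrB; apply: eq_bigr => m _.
by rewrite !ffunE scalerBr.
Qed.

Lemma Du0 : D u = 0.
Proof.
case: Ha => [_ [H1l _]].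
have := DM u u; rewrite H1l (Pu HB) (Qu HB) => H0.
by apply: (@addrI _ (D u)); rewrite addr0 -H0.
Qed.

Lemma reduction a : annH1 (env_sc c) (env_unit u) a ->
  exists t, forall y, a *: D y = P y t - Q y t.
Proof.
move=> H; have [t0 Ht] := H _ _ _ N_bimod _ delta_der.
exists (appF t0 u) => y.
have L g : appF (lN g t0) u = Psi P Q g (appF t0 u).
  by rewrite (appF_map _ _ (Psi_lin_t HB g)).
have E1 := congr1 (appF ^~ u) (Ht [ffun p => y p.1 * u p.2]).
have E2 := congr1 (appF ^~ u) (Ht [ffun p => u p.1 * y p.2]).
move: E1 E2; rewrite /= !appF_Z !appF_B !appF_rN !L !(Psi_tensor HB) !appF_delta.
rewrite /PsiL !(Psi_tensor (reg_bimod Ha)).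
rewrite (@ev_tensor _ _ _ (fun x z => Q z (Q u (D x)))); last first.
- by move=> x a' y1 y2; rewrite (Qlin HB).
- by move=> z a' x1 x2; rewrite Dlin (Qt HB) (Qt HB).
rewrite (@ev_tensor _ _ _ (fun x z => Q z (Q u (D x)))); last first.
- by move=> x a' y1 y2; rewrite (Qlin HB).
- by move=> z a' x1 x2; rewrite Dlin (Qt HB) (Qt HB).
case: Ha => [_ [H1l H1r]].
rewrite /P0 /Q0 !H1l !H1r !(Qu HB) (Pu HB) Du0 (linF0 (Qt HB _)) scaler0 => ->.
by move/eqP; rewrite eq_sym subr_eq0 => /eqP <-.
Qed.

End NB.

Section LinF.
Variables (R : comNzRingType) (I : finType).
Local Notation A := {ffun I -> R}.
Variable f : A -> A.
Hypothesis fL : forall a x y, f (scalev a x + y) = scalev a (f x) + f y.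

Lemma lf0 : f 0 = 0.
Proof.
have := fL 1 0 0; rewrite !scalev1 addr0 => H0.
by apply: (@addrI _ (f 0)); rewrite addr0 -H0.
Qed.
Lemma lfZ a x : f (scalev a x) = scalev a (f x).
Proof. by have := fL a x 0; rewrite !addr0 lf0 addr0. Qed.
Lemma lfD x y : f (x + y) = f x + f y.
Proof. by have := fL 1 x y; rewrite !scalev1. Qed.
Lemma lfN x : f (- x) = - f x.
Proof. by apply: (@addrI _ (f x)); rewrite -lfD !subrr lf0. Qed.
Lemma lfB x y : f (x - y) = f x - f y.
Proof. by rewrite lfD lfN. Qed.
End LinF.

Lemma scalev_inj (O : idomainType) (I : finType) (q : O) (x y : {ffun I -> O}) :
  q != 0 -> scalev q x = scalev q y -> x = y.
Proof.
move=> q0 /ffunP h; apply/ffunP => k; have := h k; rewrite !ffunE.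
exact: mulfI.
Qed.

Theorem lemma3p3
  (O : idomainType) (K : fieldType) (iota : {rmorphism O -> K}) (pi : O) (p : nat)
  (Hdvr : is_dvr_unif pi) (Hchar0 : char_zero O) (Hres : residue_char pi p)
  (Hcomplete : pi_complete pi) (HK : is_frac_field iota)
  (I : finType) (c : I -> I -> I -> O) (u : {ffun I -> O})
  (Hord : is_order_sep iota c u)
  (dd : nat) (Hdepth : depth_is pi (env_sc c) (env_unit u) dd)
  (s : nat) (Hs : (dd + 1 <= s)%N) :
  forall alpha beta : {ffun I -> O} -> {ffun I -> O},
    is_aut c u alpha -> is_aut c u beta ->
    (exists w w' : {ffun I -> O},
        congr_mod (pi ^+ s) (mulc c w w') u /\ congr_mod (pi ^+ s) (mulc c w' w) u /\
        forall x, congr_mod (pi ^+ s) (alpha x) (beta (mulc c (mulc c w x) w'))) ->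
    exists v v' : {ffun I -> O},
      mulc c v v' = u /\ mulc c v' v = u /\
      forall x, alpha x = beta (mulc c (mulc c v x) v').
Proof.
move=> alpha beta [aL [aM [au _]]] [bL [bM [bu [binv bK bK']]]] [w [w' [Hww [Hw'w Hx]]]].
have Ha := Hord.1.
case: (Ha) => [HA [H1l H1r]].
have s1 : (1 <= s)%N by apply: leq_trans Hs; rewrite addn1.
have weak (x y : {ffun I -> O}) : congr_mod (pi ^+ s) x y -> congr_mod pi x y.
  by move=> h; have := dvbX s1 h; rewrite expr1.
have [p1i [e1 e1']] := unit_cong Hdvr Hcomplete Ha (weak _ _ Hww).
have [p2i [e2 e2']] := unit_cong Hdvr Hcomplete Ha (weak _ _ Hw'w).
have [wi wiD] : {wi | wi = mulc c w' p1i} by exists (mulc c w' p1i).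
have wwi : mulc c w wi = u by rewrite wiD -HA e1.
have wiE : mulc c p2i w' = wi.
  by rewrite -[LHS]H1r -wwi -HA (HA p2i w' w) e2' H1l.
have wiw : mulc c wi w = u by rewrite -wiE HA e2'.
have wwiK z : mulc c w (mulc c wi z) = z by rewrite -HA wwi H1l.
have wiwK z : mulc c wi (mulc c w z) = z by rewrite -HA wiw H1l.
have dw : dvb (pi ^+ s) (w' - wi).
  have -> : w' - wi = mulc c w' (mulc c p1i (mulc c w w' - u)).
    by rewrite mulcBr e1' H1r mulcBr H1r wiD.
  by apply: dvbMl; apply: dvbMl.
pose beta' x := beta (mulc c (mulc c w x) wi).
have b'L a x y : beta' (scalev a x + y) = scalev a (beta' x) + beta' y.
  by rewrite /beta' mulcDr mulcDl mulcZr mulcZl bL.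
have b'M x y : beta' (mulc c x y) = mulc c (beta' x) (beta' y).
  by rewrite /beta' -bM !HA wiwK.
have b'u : beta' u = u by rewrite /beta' H1r wwi bu.
have Hab x : dvb (pi ^+ s) (alpha x - beta' x).
  have -> : alpha x - beta' x = (alpha x - beta (mulc c (mulc c w x) w'))
      + beta (mulc c (mulc c w x) (w' - wi)).
    by rewrite mulcBr (lfB bL) addrA subrK.
  apply: dvbD; first exact: Hx.
  have [z ->] : dvb (pi ^+ s) (mulc c (mulc c w x) (w' - wi)) by apply: dvbMl.
  by exists (beta z); rewrite (lfZ bL).
have exD x : exists z, alpha x - beta' x == scalev (pi ^+ s) z.
  by have [z hz] := Hab x; exists z; apply/eqP.
pose Dv x := xchoose (exD x).
have HDv x : alpha x - beta' x = scalev (pi ^+ s) (Dv x) := eqP (xchooseP (exD x)).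
have qn0 : pi ^+ s != 0 by rewrite expf_neq0 //; case: Hdvr.
pose Pa (x : {ffun I -> O}) (t : {ffun I -> O^o}) : {ffun I -> O^o} := mulc c (alpha x) t.
pose Qb (x : {ffun I -> O}) (t : {ffun I -> O^o}) : {ffun I -> O^o} := mulc c t (beta' x).
have HBm : is_bimod c u Pa Qb.
  split; [|split; [|split; [|split; [|split; [|split; [|split; [|split]]]]]]].
  - move=> a x y t; rewrite /Pa aL mulcDl mulcZl; reflexivity.
  - move=> a x t s'; rewrite /Pa.
    change (mulc c (alpha x) (scalev a t + s') = scalev a (mulc c (alpha x) t) + mulc c (alpha x) s').
    by rewrite mulcDr mulcZr.
  - move=> a x y t; rewrite /Qb b'L mulcDr mulcZr; reflexivity.
  - move=> a x t s'; rewrite /Qb.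
    change (mulc c (scalev a t + s') (beta' x) = scalev a (mulc c t (beta' x)) + mulc c s' (beta' x)).
    by rewrite mulcDl mulcZl.
  - by move=> x y t; rewrite /Pa aM HA.
  - by move=> t; rewrite /Pa au H1l.
  - by move=> x y t; rewrite /Qb b'M HA.
  - by move=> t; rewrite /Qb b'u H1r.
  - by move=> x y t; rewrite /Pa /Qb HA.
have HDer : is_der c Pa Qb Dv.
  split.
    move=> a x y; change (Dv (scalev a x + y) = scalev a (Dv x) + Dv y).
    apply: (scalev_inj qn0); rewrite -HDv scalevD scalevA mulrC -scalevA -!HDv aL b'L.
    by apply/ffunP => k; rewrite !ffunE /=; ring.
  move=> x y; change (Dv (mulc c x y) = mulc c (alpha x) (Dv y) + mulc c (Dv x) (beta' y)).
  apply: (scalev_inj qn0); rewrite -HDv scalevD -mulcZr -mulcZl -!HDv aM b'M.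
  by rewrite mulcBr mulcBl addrA subrK.
have Hann : annH1 (env_sc c) (env_unit u) (pi ^+ dd).
  by apply/Hdepth; exists 1; rewrite mulr1.
have [t Ht] := reduction Ha HBm HDer Hann.
have ddle : (dd <= s)%N by apply: leq_trans Hs; rewrite leq_addr.
pose e := (s - dd)%N.
have e1le : (1 <= e)%N by rewrite /e subn_gt0; move: Hs; rewrite addn1.
have qE : pi ^+ s = pi ^+ e * pi ^+ dd by rewrite -exprD /e subnK.
pose v0 := u - scalev (pi ^+ e) t.
have Ey y : mulc c (alpha y) v0 = mulc c v0 (beta' y).
  have E : alpha y - beta' y =
      scalev (pi ^+ e) (mulc c (alpha y) t) - scalev (pi ^+ e) (mulc c t (beta' y)).
    rewrite HDv qE -scalevA.
    have -> : scalev (pi ^+ dd) (Dv y) = mulc c (alpha y) t - mulc c t (beta' y) by exact: Ht.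
    by rewrite scalevB.
  rewrite /v0 mulcBr mulcBl H1r H1l mulcZr mulcZl.
  apply/eqP; rewrite -subr_eq0.
  have -> : alpha y - scalev (pi ^+ e) (mulc c (alpha y) t) -
      (beta' y - scalev (pi ^+ e) (mulc c t (beta' y))) =
      (alpha y - beta' y) - (scalev (pi ^+ e) (mulc c (alpha y) t) -
                             scalev (pi ^+ e) (mulc c t (beta' y))).
    by apply/ffunP => k; rewrite !ffunE /=; ring.
  by rewrite E subrr.
have cv0 : congr_mod pi v0 u.
  have h : dvb (pi ^+ 1) (v0 - u).
    apply: (dvbX e1le); rewrite /v0 addrAC subrr add0r; apply: dvbN.
    by exists t.
  by move: h; rewrite expr1.
have [v0i [f1 f2]] := unit_cong Hdvr Hcomplete Ha cv0.
have aE x : alpha x = mulc c (mulc c v0 (beta' x)) v0i.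
  by rewrite -Ey HA f1 H1r.
pose y0 := binv v0; pose y0i := binv v0i.
have by0 : beta y0 = v0 := bK' v0.
have by0i : beta y0i = v0i := bK' v0i.
have binj := can_inj bK.
have g1 : mulc c y0 y0i = u by apply: binj; rewrite bM by0 by0i f1 bu.
have g2 : mulc c y0i y0 = u by apply: binj; rewrite bM by0 by0i f2 bu.
have g2K z : mulc c y0i (mulc c y0 z) = z by rewrite -HA g2 H1l.
exists (mulc c y0 w), (mulc c wi y0i); split; [|split].
- by rewrite !HA wwiK.
- by rewrite !HA g2K wiw.
- move=> x; rewrite aE -by0 -by0i /beta' -!bM; congr beta.
  by rewrite !HA.
Qed.
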